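(* Let $\Gamma$ be an extended Dynkin graph with standard integral Cartan matrix, and let $v\in\mathbb{R}^I$ be any configuration. Suppose that it is possible, beginning with $v$, to fire $r$ vertices (counted with multiplicity) of amplitude $<-1$ successively until there are no vertices of amplitude $<-1$ left. Consider any other sequence, beginning with $v$, of firings of $s$ vertices of amplitude $<-1$. Then $s\le r$, and this sequence can be extended to a sequence of $r$ firings of vertices of amplitude $<-1$ which terminates at the same configuration as the first sequence.
   Context: $\Gamma$ is an extended Dynkin graph (Dynkin diagram of an affine Weyl group) with vertex set $I$ and standard integral generalized Cartan matrix $C=(c_{ij})$. Configurations are $v\in\mathbb{R}^I$. Firing vertex $i$ replaces $v$ by $f_i(v)$, where $f_i(v)_i=-v_i$, $f_i(v)_j=v_j-c_{ij}v_i$ if $j$ is adjacent to $i$, and $f_i(v)_j=v_j$ otherwise. ''Firing a vertex of amplitude $<-1$'' means firing $i$ when the current value $v_i$ satisfies $v_i<-1$. *)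

(* Defs.v *)
From HB Require Import structures.
From mathcomp Require Import all_boot all_order all_algebra.
From mathcomp Require Import reals.
Set Implicit Arguments. Unset Strict Implicit. Unset Printing Implicit Defensive.
Import Order.TTheory GRing.Theory Num.Theory.
Local Open Scope ring_scope.

(** * Affine (extended) Dynkin diagrams of affine Weyl groups (Kac's Table Aff 1),
    vertex 0 being the extra (affine) vertex.  An edge (a, b, cab, cba) records
    the Cartan entries c_ab and c_ba. *)
Inductive afftype : Type :=
| AffA of nat
| AffB of nat
| AffC of nat
| AffD of nat
| AffE6 | AffE7 | AffE8 | AffF4 | AffG2.

Definition aff_valid (t : afftype) : bool :=
  match t with
  | AffA l => (1 <= l)%N | AffB l => (3 <= l)%N
  | AffC l => (2 <= l)%N | AffD l => (4 <= l)%N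
  | _ => true
  end.

Definition aff_size (t : afftype) : nat :=
  match t with
  | AffA l | AffB l | AffC l | AffD l => l.+1
  | AffE6 => 7 | AffE7 => 8 | AffE8 => 9 | AffF4 => 5 | AffG2 => 3
  end.

Definition sedge (a b : nat) : nat * nat * int * int := (a, b, -1, -1).
Definition chain (m n : nat) := [seq sedge k k.+1 | k <- iota m (n - m)].

Definition aff_edges (t : afftype) : seq (nat * nat * int * int) :=
  match t with
  | AffA l => if l == 1%N then [:: (0%N, 1%N, -2, -2)]
              else chain 0 l ++ [:: sedge l 0]
  | AffB l => sedge 0 2 :: chain 1 l.-1 ++ [:: (l.-1, l, -2, -1)]
  | AffC l => (0%N, 1%N, -1, -2) :: chain 1 l.-1 ++ [:: (l.-1, l, -2, -1)]
  | AffD l => sedge 0 2 :: sedge 1 2 :: chain 2 l.-1 ++ [:: sedge l.-2 l]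
  | AffE6 => [:: sedge 1 2; sedge 2 3; sedge 3 4; sedge 4 5; sedge 3 6; sedge 6 0]
  | AffE7 => chain 0 6 ++ [:: sedge 3 7]
  | AffE8 => chain 0 7 ++ [:: sedge 5 8]
  | AffF4 => [:: sedge 0 1; sedge 1 2; (2%N, 3%N, -2, -1); sedge 3 4]
  | AffG2 => [:: sedge 0 1; (1%N, 2%N, -3, -1)]
  end.

Definition aff_cartan (t : afftype) (i j : nat) : int :=
  if i == j then 2 else
  foldr (fun e r => let: (a, b, cab, cba) := e in
           if (a == i) && (b == j) then cab
           else if (b == i) && (a == j) then cba else r) 0 (aff_edges t).

(** Since the convention for the
    direction of arrows (c_ij vs c_ji) is not fixed, both the matrix and its transpose
    are allowed. *)
Definition extended_dynkin (I : finType) (C : I -> I -> int) : Prop :=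
  exists t : afftype, aff_valid t /\
  exists sigma : I -> 'I_(aff_size t), bijective sigma /\
    ((forall i j, C i j = aff_cartan t (sigma i) (sigma j)) \/
     (forall i j, C i j = aff_cartan t (sigma j) (sigma i))).

Section Game.
Variables (R : realType) (I : finType) (C : I -> I -> int).

Definition fire (i : I) (v : I -> R) : I -> R :=
  fun j => if j == i then - v i else v j - (C i j)%:~R * v i.

Definition run (v : I -> R) (s : seq I) : I -> R := foldl (fun w i => fire i w) v s.

Fixpoint legal (v : I -> R) (s : seq I) : bool :=
  if s is i :: s' then (v i < -1) && legal (fire i v) s' else true.

Definition terminal (v : I -> R) : Prop := forall i, ~ (v i < -1).
End Game.

(* Main.v *)
Require Import Defs.
From HB Require Import structures.
From mathcomp Require Import all_boot all_order all_algebra.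
From mathcomp Require Import reals boolp.
From mathcomp Require Import ring lra.
Import Order.TTheory GRing.Theory Num.Theory.
Local Open Scope ring_scope.

Section S.
Variables (R : realType) (I : finType) (C : I -> I -> int).

Fixpoint alt (x y : I) (n : nat) : seq I :=
  if n is n'.+1 then x :: alt y x n' else [::].

Definition polyg (v : I -> R) i j :=
  (exists m, [/\ (0 < m)%N, legal C v (alt i j m), legal C v (alt j i m)
     & run C v (alt i j m) = run C v (alt j i m)])
  \/ (forall n, legal C v (alt i j n)).

Ltac simpf hij hji ep eq :=
  rewrite /= /fire /= ?eqxx ?(negbTE hij) ?(negbTE hji) /= ?ep ?eq ?andbT;
  repeat (apply/andP; split); lra.
Ltac simpr hij hji ep eq :=
  rewrite /run /=; apply/funext => k; rewrite /fire /=;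
    have [->|_] := eqVneq k i;
    [ rewrite ?eqxx ?(negbTE hij) ?(negbTE hji) /= ?ep ?eq; ring
    | have [->|_] := eqVneq k j;
      [ rewrite ?eqxx ?(negbTE hij) ?(negbTE hji) /= ?ep ?eq; ring
      | rewrite ?eqxx ?(negbTE hij) ?(negbTE hji) /= ?ep ?eq; ring ]].

Lemma pgc0 i j v : i != j -> v i < -1 -> v j < -1 -> C i j = 0 -> C j i = 0 -> polyg v i j.
Proof.
move=> hij a b hp hq; have hji : j != i by rewrite eq_sym.
have ep : (C i j)%:~R = 0 :> R by rewrite hp.
have eq : (C j i)%:~R = 0 :> R by rewrite hq.
left; exists 2%N; split => //; [simpf hij hji ep eq|simpf hij hji ep eq|simpr hij hji ep eq].
Qed.

Lemma pgc1 i j v : i != j -> v i < -1 -> v j < -1 -> C i j = -1 -> C j i = -1 -> polyg v i j.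
Proof.
move=> hij a b hp hq; have hji : j != i by rewrite eq_sym.
have ep : (C i j)%:~R = -1 :> R by rewrite hp.
have eq : (C j i)%:~R = -1 :> R by rewrite hq.
left; exists 3%N; split => //; [simpf hij hji ep eq|simpf hij hji ep eq|simpr hij hji ep eq].
Qed.

Lemma pgc2 i j v : i != j -> v i < -1 -> v j < -1 -> C i j = -1 -> C j i = -2 -> polyg v i j.
Proof.
move=> hij a b hp hq; have hji : j != i by rewrite eq_sym.
have ep : (C i j)%:~R = -1 :> R by rewrite hp.
have eq : (C j i)%:~R = -2 :> R by rewrite hq.
left; exists 4%N; split => //; [simpf hij hji ep eq|simpf hij hji ep eq|simpr hij hji ep eq].
Qed.

Lemma pgc3 i j v : i != j -> v i < -1 -> v j < -1 -> C i j = -2 -> C j i = -1 -> polyg v i j.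
Proof.
move=> hij a b hp hq; have hji : j != i by rewrite eq_sym.
have ep : (C i j)%:~R = -2 :> R by rewrite hp.
have eq : (C j i)%:~R = -1 :> R by rewrite hq.
left; exists 4%N; split => //; [simpf hij hji ep eq|simpf hij hji ep eq|simpr hij hji ep eq].
Qed.

Lemma pgc4 i j v : i != j -> v i < -1 -> v j < -1 -> C i j = -1 -> C j i = -3 -> polyg v i j.
Proof.
move=> hij a b hp hq; have hji : j != i by rewrite eq_sym.
have ep : (C i j)%:~R = -1 :> R by rewrite hp.
have eq : (C j i)%:~R = -3 :> R by rewrite hq.
left; exists 6%N; split => //; [simpf hij hji ep eq|simpf hij hji ep eq|simpr hij hji ep eq].
Qed.

Lemma pgc5 i j v : i != j -> v i < -1 -> v j < -1 -> C i j = -3 -> C j i = -1 -> polyg v i j.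
Proof.
move=> hij a b hp hq; have hji : j != i by rewrite eq_sym.
have ep : (C i j)%:~R = -3 :> R by rewrite hp.
have eq : (C j i)%:~R = -1 :> R by rewrite hq.
left; exists 6%N; split => //; [simpf hij hji ep eq|simpf hij hji ep eq|simpr hij hji ep eq].
Qed.

Lemma inf_alt n : forall x y (w : I -> R), x != y -> C x y = -2 -> C y x = -2 ->
  w x < -1 -> w x + w y < 0 -> legal C w (alt x y n).
Proof.
elim: n => [//|n IH] x y w hxy h1 h2 a b /=.
have hyx : y != x by rewrite eq_sym.
rewrite a /=; apply: IH => //; rewrite /fire ?eqxx (negbTE hyx) h1 /=; lra.
Qed.

Lemma pgc6 i j v : i != j -> v i < -1 -> v j < -1 -> C i j = -2 -> C j i = -2 -> polyg v i j.
Proof. move=> hij a b hp hq; right => n; apply: inf_alt => //; lra. Qed.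

Definition okp (p : int * int) : bool :=
  p \in [:: (0, 0); (-1, -1); (-1, -2); (-2, -1); (-1, -3); (-3, -1); (-2, -2)].

Lemma pg_ok i j v : i != j -> v i < -1 -> v j < -1 -> okp (C i j, C j i) -> polyg v i j.
Proof.
move=> hij a b; rewrite /okp !inE.
case/orP => [/eqP[e1 e2]|]; first exact: pgc0.
case/orP => [/eqP[e1 e2]|]; first exact: pgc1.
case/orP => [/eqP[e1 e2]|]; first exact: pgc2.
case/orP => [/eqP[e1 e2]|]; first exact: pgc3.
case/orP => [/eqP[e1 e2]|]; first exact: pgc4.
case/orP => [/eqP[e1 e2]|]; first exact: pgc5.
move=> /eqP[e1 e2]; exact: pgc6.
Qed.

Lemma legal_cat (w : I -> R) s t : legal C w (s ++ t) = legal C w s && legal C (run C w s) t.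
Proof. elim: s w => [//|x s IH] w /=; rewrite IH andbA. by []. Qed.

Lemma run_cat (w : I -> R) s t : run C w (s ++ t) = run C (run C w s) t.
Proof. by rewrite /run foldl_cat. Qed.

Lemma size_alt x y n : size (alt x y n) = n.
Proof. by elim: n x y => [//|n IH] x y /=; rewrite IH. Qed.


Lemma mainr (r : nat) : forall (v : I -> R) s1, size s1 = r -> legal C v s1 -> terminal (run C v s1) ->
  (forall i j (w : I -> R), i != j -> w i < -1 -> w j < -1 -> polyg w i j) ->
  forall s2 : seq I, legal C v s2 ->
    (size s2 <= r)%N /\
    exists s3 : seq I, [/\ legal C v (s2 ++ s3), size (s2 ++ s3) = r
                         & run C v (s2 ++ s3) = run C v s1].
Proof.
elim: r => [|r IH] v s1 hs hl ht hP s2 hl2.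
  case: s1 hs hl ht => // _ _ ht; case: s2 hl2 => [|x s2] /=.
    by move=> _; split => //; exists [::].
  by case/andP => /ht.
case: s1 hs hl ht => [//|i s1] [hs] /= /andP[hi hl] ht.
case: s2 hl2 => [|j s2] /=.
  by move=> _; split => //; exists (i :: s1); rewrite /= hi hl hs.
case/andP => hj hl2.
have [eji|nji] := eqVneq j i.
  subst j; have [h1 [s3 [l3 z3 r3]]] := IH _ _ hs hl ht hP _ hl2.
  by split => //; exists s3; rewrite /= hi l3 z3 r3.
have hij : i != j by rewrite eq_sym.
have [[m [m0 la lb re]]|inf] := hP i j v hij hi hj; last first.
  move/andP: (inf r.+2) => [_ h].
  by have [] := IH _ _ hs hl ht hP (alt j i r.+1) h; rewrite size_alt ltnn.
case: m m0 la lb re => [//|m] _ /= /andP[_ la] /andP[_ lb] re.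
have [hm [t [lt zt rt]]] := IH _ _ hs hl ht hP _ la.
have eq1 : run C (fire C j v) (alt i j m) = run C (fire C i v) (alt j i m) by [].
have l1 : legal C (fire C j v) (alt i j m ++ t).
  rewrite legal_cat lb /= eq1; by move: lt; rewrite legal_cat => /andP[].
have r1 : run C (fire C j v) (alt i j m ++ t) = run C (fire C i v) s1.
  by rewrite run_cat eq1 -run_cat rt.
have z1 : size (alt i j m ++ t) = r by move: zt; rewrite !size_cat !size_alt.
have ht1 : terminal (run C (fire C j v) (alt i j m ++ t)) by rewrite r1.
have [h2 [s3 [l3 z3 r3]]] := IH _ _ z1 l1 ht1 hP _ hl2.
by split => //; exists s3; rewrite /= hj l3 z3 r3 r1.
Qed.

End S.
Definition cf (i j : nat) (es : seq (nat * nat * int * int)) : int :=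
  foldr (fun e r => let: (a, b, cab, cba) := e in
           if (a == i) && (b == j) then cab
           else if (b == i) && (a == j) then cba else r) 0 es.

Definition eok (e : nat * nat * int * int) : bool := okp (e.1.2, e.2) && okp (e.2, e.1.2).

Lemma fold_ok es (i j : nat) : i != j -> all eok es -> okp (cf i j es, cf j i es).
Proof.
move=> hij; elim: es => [|[[[a b] cab] cba] es IH] //=.
move=> /andP[/andP[h1 h2] /IH{}IH].
rewrite [(a == j) && _]andbC [(b == j) && _]andbC.
case: ifP => [/andP[/eqP ha /eqP hb]|_].
  rewrite ifF //; apply/negbTE; apply/negP => /andP[_ /eqP haj].
  by move: hij; rewrite -ha haj eqxx.
by case: ifP.
Qed.

Lemma chain_ok m n : all eok (chain m n).
Proof. by rewrite /chain all_map; apply/allP. Qed.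

Lemma edges_ok t : all eok (aff_edges t).
Proof.
case: t => [l|l|l|l| | | | |] /=; rewrite ?all_cat ?chain_ok //.
by case: ifP => _ //=; rewrite all_cat chain_ok.
Qed.

Lemma C_ok (I : finType) (C : I -> I -> int) : extended_dynkin C ->
  forall i j, i != j -> okp (C i j, C j i).
Proof.
case=> t [_ [sigma [[g hg _] h]]] i j hij.
have hs : (nat_of_ord (sigma i) != sigma j).
  apply: contra hij => /eqP/val_inj e; apply/eqP.
  by rewrite -(hg i) -(hg j) e.
have hs' : (nat_of_ord (sigma j) != sigma i) by rewrite eq_sym.
case: h => h; rewrite !h /aff_cartan (negbTE hs) (negbTE hs').
  exact (fold_ok _ _ _ hs (edges_ok t)).
exact (fold_ok _ _ _ hs' (edges_ok t)).
Qed.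

Theorem lemma3p4 (R : realType) (I : finType) (C : I -> I -> int)
  (hC : extended_dynkin C) (v : I -> R) (s1 : seq I) :
  legal C v s1 -> terminal (run C v s1) ->
  forall s2 : seq I, legal C v s2 ->
    (size s2 <= size s1)%N /\
    exists s3 : seq I, [/\ legal C v (s2 ++ s3), size (s2 ++ s3) = size s1
                         & run C v (s2 ++ s3) = run C v s1].
Proof.
move=> hl ht s2 hl2.
apply: (@mainr R I C (size s1) v s1 (erefl _) hl ht _ s2 hl2).
move=> i j w hij a b; apply: pg_ok => //; exact: C_ok.
Qed.
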